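(* Let $\mathcal{P}=\{P_1,\ldots,P_n\}$, let $\mathcal{Q}\subseteq 2^{\mathcal{P}}$ and let $\mathcal{F}\subseteq 2^{\mathcal{P}}$ be a fail-prone system. Let $I=\langle \xi_{\mathcal{Q}_{\bar X}},\ \xi_{\mathcal{Q}_{\bar Y}},\ \lambda,\ \delta\rangle\subseteq\mathbb{B}(\bar X,\bar Y,\bar T)$ and let $\mathcal{G}$ be a Gröbner basis for $I$. If $|SM(\mathcal{G})|=|\mathcal{Q}|^2\cdot|\mathcal{F}^*|$, then $\mathcal{Q}$ fulfills dissemination consistency with respect to $\mathcal{F}$, i.e. $Q_1\cap Q_2\not\subseteq F$ for all $Q_1,Q_2\in\mathcal{Q}$ and all $F\in\mathcal{F}$.
   Context: $\mathbb{B}=\mathbb{F}_2$; $\mathbb{B}(\bar X,\bar Y,\bar T)$ is the Boolean polynomial ring $\mathbb{B}[X_1,\ldots,X_n,Y_1,\ldots,Y_n,T_1,\ldots,T_n]$ modulo $\langle X_i^2-X_i,Y_i^2-Y_i,T_i^2-T_i\rangle$. $\varphi:2^{\mathcal{P}}\to\mathbb{B}^n$ sends a set to its indicator vector. For $S\subseteq\mathcal{P}$, $\xi_S(\bar Z)=\prod_{i=1}^n(1+Z_i+\varphi(S)_i)$; for $\mathcal{A}\subseteq 2^{\mathcal{P}}$, $\xi_{\mathcal{A}_{\bar Z}}=\prod_{A\in\mathcal{A}}(\xi_A(\bar Z)+1)$. $\gamma(\bar X,\bar Y)=\prod_{i=1}^n(X_iY_i+Y_i+1)+1$, and $\lambda(\bar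 T)=\prod_{F\in\mathcal{F}}\gamma(\varphi(F),\bar T)$. $\delta(\bar X,\bar Y,\bar T)=\prod_{i=1}^n(T_iX_iY_i+X_iY_i+1)$. $\mathcal{F}^*=\{F'\subseteq F: F\in\mathcal{F}\}$. A fail-prone system is a collection of subsets of $\mathcal{P}$ none of which is contained in another. Monomial order: lexicographic with block order $\bar T<\bar Y<\bar X$ and within each block $X_n\prec\cdots\prec X_1$ etc. A Gröbner basis of $I$ is a generating set $\mathcal{G}$ such that every nonzero $f\in I$ has leading monomial divisible by that of some $g\in\mathcal{G}$; $SM(\mathcal{G})$ is the set of multilinear monomials not in the ideal generated by the leading monomials of elements of $I$. *)

(* Defs.v *)
(* Boolean polynomial ring B(X,Y,T) = F_2[X,Y,T]/<Z^2-Z>,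
   represented by its canonical multilinear representatives: a Boolean
   polynomial in k variables is its coefficient function on multilinear
   monomials, a monomial being the set of variables occurring in it. *)
From HB Require Import structures.
From mathcomp Require Import all_boot all_order all_algebra.
Set Implicit Arguments. Unset Strict Implicit. Unset Printing Implicit Defensive.
Import Order.TTheory GRing.Theory.
Local Open Scope ring_scope.

Definition mono (k : nat) := {set 'I_k}.
Definition bpoly (k : nat) := {ffun {set 'I_k} -> 'F_2}.

Section BoolPoly.
Variable k : nat.

Definition bmono (m : {set 'I_k}) : bpoly k := [ffun m' => ((m' == m) : nat)%:R].
Definition bconst (c : 'F_2) : bpoly k := [ffun m => if m == set0 then c else 0].
Definition bvar (j : 'I_k) : bpoly k := bmono [set j].
Definition bone : bpoly k := bmono set0.

(* product in the Boolean ring: monomials multiply by union (Z_i^2 = Z_i) *)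
Definition bmul (p q : bpoly k) : bpoly k :=
  [ffun m => \sum_(a : {set 'I_k}) \sum_(b : {set 'I_k} | a :|: b == m) p a * q b].

Definition bprod (s : seq (bpoly k)) : bpoly k := foldr bmul bone s.

Definition ideal_gen (s : seq (bpoly k)) (f : bpoly k) : bool :=
  [exists c : {ffun 'I_(size s) -> bpoly k},
     f == \sum_(i < size s) bmul (c i) (s`_i)].

(* lexicographic order on multilinear monomials, variable 0 being the largest:
   m1 < m2 iff at the first variable where they differ, m2 contains it *)
Definition mlt (m1 m2 : {set 'I_k}) : bool :=
  [exists i : 'I_k, [&& i \in m2, i \notin m1 &
     [forall j : 'I_k, (j < i)%N ==> ((j \in m1) == (j \in m2))]]].

Definition is_LM (p : bpoly k) (m : {set 'I_k}) : bool :=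
  (p m != 0) && [forall m' : {set 'I_k}, (p m' != 0) ==> ((m' == m) || mlt m' m)].

Definition is_groebner (I : pred (bpoly k)) (G : seq (bpoly k)) : Prop :=
  (forall f, I f = ideal_gen G f) /\
  (forall f, I f -> f != 0 ->
     exists2 g, g \in G & exists mf mg, [/\ is_LM f mf, is_LM g mg & mg \subset mf]).

Definition LMset (I : pred (bpoly k)) : {set {set 'I_k}} :=
  [set m | [exists f : bpoly k, [&& I f, f != 0 & is_LM f m]]].

Definition SM (I : pred (bpoly k)) : {set {set 'I_k}} :=
  [set m | ~~ ideal_gen [seq bmono l | l <- enum (LMset I)] (bmono m)].

End BoolPoly.
Arguments bconst {k} c.
Arguments bone {k}.

Section Ideal.
Variable n : nat.
Notation k := (n + n + n)%N.

(* variables: X_i has index i, Y_i has index n+i, T_i has index 2n+i *)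
Definition Xv (i : 'I_n) : bpoly k := bvar (lshift n (lshift n i)).
Definition Yv (i : 'I_n) : bpoly k := bvar (lshift n (rshift n i)).
Definition Tv (i : 'I_n) : bpoly k := bvar (rshift (n + n) i).

Definition phi (S : {set 'I_n}) (i : 'I_n) : 'F_2 := ((i \in S) : nat)%:R.

Definition xi (S : {set 'I_n}) (Z : 'I_n -> bpoly k) : bpoly k :=
  bprod [seq bconst 1 + Z i + bconst (phi S i) | i <- enum 'I_n].

Definition xiA (A : {set {set 'I_n}}) (Z : 'I_n -> bpoly k) : bpoly k :=
  bprod [seq xi A0 Z + bconst 1 | A0 <- enum A].

Definition gamma (c : 'I_n -> 'F_2) (Z : 'I_n -> bpoly k) : bpoly k :=
  bprod [seq bmul (bconst (c i)) (Z i) + Z i + bconst 1 | i <- enum 'I_n] + bconst 1.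

Definition lambda (F : {set {set 'I_n}}) : bpoly k :=
  bprod [seq gamma (phi F0) Tv | F0 <- enum F].

Definition delta : bpoly k :=
  bprod [seq bmul (Tv i) (bmul (Xv i) (Yv i)) + bmul (Xv i) (Yv i) + bconst 1
        | i <- enum 'I_n].

Definition ideal_I (Q F : {set {set 'I_n}}) : pred (bpoly k) :=
  ideal_gen [:: xiA Q Xv; xiA Q Yv; lambda F; delta].

Definition fail_prone (F : {set {set 'I_n}}) : Prop :=
  forall F1 F2, F1 \in F -> F2 \in F -> F1 \subset F2 -> F1 = F2.

Definition Fstar (F : {set {set 'I_n}}) : {set {set 'I_n}} :=
  [set F' : {set 'I_n} | [exists F0 in F, F' \subset F0]].

End Ideal.

(* Main.v *)
Require Import Defs.
From mathcomp Require Import all_boot all_order all_algebra.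
From mathcomp Require Import ring.
Set Implicit Arguments. Unset Strict Implicit. Unset Printing Implicit Defensive.
Import GRing.Theory.
Local Open Scope ring_scope.

Lemma F2_11 : (1 + 1 : 'F_2) = 0. Proof. by apply: val_inj. Qed.
Lemma F2_01 (z : 'F_2) : z = 0 \/ z = 1.
Proof. case: z => [[|[|m]]] H. left; exact/val_inj. right; exact/val_inj. by []. Qed.
Lemma F2_10 : (1 : 'F_2) != 0. Proof. exact: oner_neq0. Qed.

Ltac f2 := rewrite /= ?mulr1n ?mulr0n ?mul0r ?mulr0 ?mul1r ?mulr1 ?add0r ?addr0 ?subr0 ?sub0r ?F2_11 ?add0r ?addr0 //.

Lemma natbM (b1 b2 : bool) : ((b1:nat)%:R * (b2:nat)%:R : 'F_2) = (b1 && b2)%:R.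
Proof. by case: b1; case: b2; f2. Qed.
Lemma natb_add1 (b : bool) : ((b:nat)%:R + 1 : 'F_2) = (~~ b)%:R.
Proof. by case: b; f2. Qed.
Lemma natb_eq0 (b : bool) : ((b:nat)%:R : 'F_2) = 0 -> b = false.
Proof. by case: b => //=; rewrite mulr1n => /eqP; rewrite oner_eq0. Qed.
Lemma natb_inj (b1 b2 : bool) : ((b1:nat)%:R : 'F_2) = (b2:nat)%:R -> b1 = b2.
Proof. by case: b1; case: b2 => //=; rewrite mulr1n mulr0n => /eqP; rewrite ?oner_eq0 // eq_sym oner_eq0. Qed.
Lemma prod_natb (I : Type) (r : seq I) (P : pred I) :
  \prod_(i <- r) ((P i : nat)%:R : 'F_2) = (all P r : nat)%:R.
Proof. elim: r => [|a r IH]; first by rewrite big_nil /= mulr1n.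
by rewrite big_cons IH natbM. Qed.
Lemma all_enum_forall (T : finType) (P : pred T) : all P (enum T) = [forall i, P i].
Proof.
apply/allP/forallP => h i; first by apply: h; rewrite mem_enum.
by move=> _; apply: h.
Qed.

Lemma F2_tele (f b0 b1 b2 b3 : 'F_2) : ~~ [&& b0 == 0, b1 == 0, b2 == 0 & b3 == 0] ->
  f = f * 1 * b0 + (f * (1 - b0) * b1 + (f * ((1 - b0) * (1 - b1)) * b2 +
      (f * ((1 - b0) * (1 - b1) * (1 - b2)) * b3 + 0))).
Proof.
move=> h.
have E : f * 1 * b0 + (f * (1 - b0) * b1 + (f * ((1 - b0) * (1 - b1)) * b2 +
      (f * ((1 - b0) * (1 - b1) * (1 - b2)) * b3 + 0))) =
      f - f * ((1 - b0) * (1 - b1) * (1 - b2) * (1 - b3)) by ring.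
rewrite E.
suff -> : (1 - b0) * (1 - b1) * (1 - b2) * (1 - b3) = 0 by rewrite mulr0 subr0.
move: h; case: (F2_01 b0) => ->; case: (F2_01 b1) => ->; case: (F2_01 b2) => ->;
  case: (F2_01 b3) => ->; rewrite ?subrr ?subr0 ?mul0r ?mulr0 ?mul1r ?mulr1 ?mul0r ?eqxx //.
Qed.

Section Ev.
Variable k : nat.
Implicit Types (p q : bpoly k) (x m : {set 'I_k}).
Definition ev p : bpoly k := [ffun x : {set 'I_k} => \sum_(m : {set 'I_k} | m \subset x) p m].


Lemma evE p x : ev p x = \sum_(m : {set 'I_k} | m \subset x) p m. Proof. by rewrite ffunE. Qed.
Lemma evD p q x : ev (p + q) x = ev p x + ev q x.
Proof. rewrite !evE -big_split /=; apply: eq_bigr => m _; by rewrite ffunE. Qed.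
Lemma evN p x : ev (- p) x = - ev p x.
Proof. rewrite !evE -sumrN; apply: eq_bigr => m _; by rewrite ffunE. Qed.
Lemma ev0 x : ev 0 x = 0. Proof. rewrite evE big1 // => m _; by rewrite ffunE. Qed.
Lemma evB p q x : ev (p - q) x = ev p x - ev q x. Proof. by rewrite evD evN. Qed.
Lemma ev_sum (I : finType) (f : I -> bpoly k) x : ev (\sum_i f i) x = \sum_i ev (f i) x.
Proof. exact: (big_morph (fun p => ev p x) (fun p q => evD p q x) (ev0 x)). Qed.

Lemma evM p q x : ev (bmul p q) x = ev p x * ev q x.
Proof.
rewrite !evE big_distrlr /=.
transitivity (\sum_(a : {set 'I_k}) \sum_(b : {set 'I_k} | (a :|: b) \subset x) p a * q b).
  under eq_bigr => m _ do rewrite ffunE.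
  rewrite exchange_big /=; apply: eq_bigr => a _.
  rewrite (eq_bigr (fun m => \sum_b (if a :|: b == m then p a * q b else 0)));
    last by move=> m _; rewrite big_mkcond.
  rewrite exchange_big [RHS]big_mkcond /=; apply: eq_bigr => b _.
  rewrite big_mkcond (bigD1 (a :|: b)) //= eqxx big1 ?addr0 //.
  by move=> m hm; rewrite eq_sym (negbTE hm) if_same.
rewrite [RHS]big_mkcond; apply: eq_bigr => a _.
case: ifP => ha; first by apply: eq_bigl => b; rewrite subUset ha.
by rewrite big_pred0 // => b; rewrite subUset ha.
Qed.

Lemma ev_bmono m x : ev (bmono m) x = (m \subset x : nat)%:R.
Proof.
rewrite evE big_mkcond (bigD1 m) //= ffunE eqxx big1 ?addr0.
  by case: (m \subset x).
by move=> m' hm'; rewrite ffunE (negbTE hm') if_same.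
Qed.

Lemma ev_bconst c x : ev (bconst c) x = c.
Proof.
rewrite evE (bigD1 set0) ?sub0set //= ffunE eqxx big1 ?addr0 //.
by move=> m /andP[_ hm]; rewrite ffunE (negbTE hm).
Qed.

Lemma ev_bone x : ev bone x = 1.
Proof. by rewrite /bone ev_bmono sub0set. Qed.

Lemma ev_bvar j x : ev (bvar j) x = (j \in x : nat)%:R.
Proof. by rewrite /bvar ev_bmono sub1set. Qed.

Lemma ev_bprod s x : ev (bprod s) x = \prod_(p <- s) ev p x.
Proof.
elim: s => [|a s IH]; first by rewrite big_nil ev_bone.
by rewrite big_cons /= evM IH.
Qed.

Lemma ev_eq0 r : (forall x, ev r x = 0) -> r = 0.
Proof.
move=> H.
case: (pickP (fun m => r m != 0)) => [m0 hm0 | hn]; last first.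
  by apply/ffunP => m; move: (hn m) => /negbFE/eqP ->; rewrite ffunE.
case: (@arg_minnP _ m0 (fun m => r m != 0) (fun m : {set 'I_k} => #|m|) hm0) => m hm hmin.
move: (H m); rewrite evE (bigD1 m) //= big1 ?addr0 => [/eqP|m' /andP[hs hne]].
  by rewrite (negbTE hm).
case: (eqVneq (r m') 0) => // hr.
have := hmin m' hr.
have hp : m' \proper m by rewrite properEneq hne hs.
by rewrite leqNgt (proper_card hp).
Qed.

Lemma ev_inj p q : (forall x, ev p x = ev q x) -> p = q.
Proof.
move=> H; apply/eqP; rewrite -subr_eq0; apply/eqP; apply: ev_eq0 => x.
by rewrite evB H subrr.
Qed.

Lemma ev_bij : bijective ev.
Proof.
apply: injF_bij => p q hpq; apply: ev_inj => x; by rewrite hpq.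
Qed.

Lemma bmul1 p : bmul bone p = p.
Proof. by apply: ev_inj => x; rewrite evM ev_bone mul1r. Qed.
Lemma bmul0 p : bmul 0 p = 0.
Proof. by apply: ev_inj => x; rewrite evM ev0 mul0r. Qed.

End Ev.

Lemma natb_congr (b1 b2 : bool) : b1 = b2 -> ((b1:nat)%:R : 'F_2) = (b2:nat)%:R.
Proof. by move=> ->. Qed.

Section Gen.
Variable n : nat.
Local Notation k := (n + n + n)%N.
Implicit Types (x : {set 'I_k}).

Definition xs x : {set 'I_n} := [set i | lshift n (lshift n i) \in x].
Definition ys x : {set 'I_n} := [set i | lshift n (rshift n i) \in x].
Definition ts x : {set 'I_n} := [set i | rshift (n + n) i \in x].

Lemma ev_Xv i x : ev (Xv i) x = (i \in xs x : nat)%:R.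
Proof. by rewrite /Xv ev_bvar inE. Qed.
Lemma ev_Yv i x : ev (Yv i) x = (i \in ys x : nat)%:R.
Proof. by rewrite /Yv ev_bvar inE. Qed.
Lemma ev_Tv i x : ev (Tv i) x = (i \in ts x : nat)%:R.
Proof. by rewrite /Tv ev_bvar inE. Qed.

Lemma ev_xiA (Q : {set {set 'I_n}}) (Z : 'I_n -> bpoly k) (zs : {set 'I_n}) x :
  (forall i, ev (Z i) x = (i \in zs : nat)%:R) ->
  ev (xiA Q Z) x = (zs \notin Q : nat)%:R.
Proof.
move=> hZ; rewrite /xiA ev_bprod big_map.
rewrite (eq_bigr (fun A => ((zs != A) : nat)%:R)); last first.
  move=> A _; rewrite evD ev_bconst /xi ev_bprod big_map.
  rewrite (eq_bigr (fun i => ((i \in zs) == (i \in A) : nat)%:R)); last first.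
    move=> i _; rewrite !evD !ev_bconst hZ /phi.
    by case: (i \in zs); case: (i \in A); f2.
  rewrite prod_natb all_enum_forall natb_add1; apply: natb_congr; congr (~~ _).
  apply/forallP/eqP => [h|->//]; apply/setP => i; exact/eqP/h.
rewrite prod_natb; apply: natb_congr.
rewrite -mem_enum; elim: (enum Q) => //= a s ->; by rewrite in_cons negb_or.
Qed.

Lemma ev_lambda (F : {set {set 'I_n}}) x :
  ev (lambda F) x = (ts x \notin Fstar F : nat)%:R.
Proof.
rewrite /lambda ev_bprod big_map.
rewrite (eq_bigr (fun F0 : {set 'I_n} => ((~~ (ts x \subset F0) : nat)%:R : 'F_2))); last first.
  move=> F0 _; rewrite /gamma evD ev_bconst ev_bprod big_map.
  rewrite (eq_bigr (fun i => ((i \in ts x) ==> (i \in F0) : nat)%:R)); last first.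
    move=> i _; rewrite !evD evM !ev_bconst ev_Tv /phi.
    by case: (i \in ts x); case: (i \in F0); f2.
  rewrite prod_natb all_enum_forall natb_add1; apply: natb_congr; congr (~~ _).
  apply/forallP/subsetP => h i; [exact/implyP/h | exact/implyP/h].
rewrite prod_natb; apply: natb_congr.
rewrite inE; apply/idP/idP.
  move=> /allP h; apply/existsPn => F0; apply/negP => /andP[hF hs].
  by move: (h F0); rewrite mem_enum hF hs => /(_ isT).
move=> /existsPn h; apply/allP => F0; rewrite mem_enum => hF.
by move: (h F0); rewrite hF.
Qed.

Lemma ev_delta x :
  ev (delta n) x = (xs x :&: ys x \subset ts x : nat)%:R.
Proof.
rewrite /delta ev_bprod big_map.
rewrite (eq_bigr (fun i => ((i \in xs x) && (i \in ys x) ==> (i \in ts x) : nat)%:R)); last first.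
  move=> i _; rewrite !evD !evM ev_bconst ev_Tv ev_Xv ev_Yv.
  by case: (i \in ts x); case: (i \in xs x); case: (i \in ys x); f2.
rewrite prod_natb all_enum_forall; apply: natb_congr.
apply/forallP/subsetP => h i; first by rewrite inE => /andP[h1 h2]; move: (h i); rewrite h1 h2.
by apply/implyP => hi; apply: h; rewrite inE.
Qed.

End Gen.

Section Main.
Variable n : nat.
Local Notation k := (n + n + n)%N.
Variables Q F : {set {set 'I_n}}.

Definition Vset : {set {set 'I_k}} :=
  [set x | [&& ev (xiA Q (@Xv n)) x == 0, ev (xiA Q (@Yv n)) x == 0,
              ev (lambda F) x == 0 & ev (delta n) x == 0]].

Lemma vanish_in_I p : (forall x, x \in Vset -> ev p x = 0) -> ideal_I Q F p.
Proof.
move=> H; rewrite /ideal_I /ideal_gen.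
case: (ev_bij k) => evi _ evK.
pose a0 x := ev (xiA Q (@Xv n)) x.
pose a1 x := ev (xiA Q (@Yv n)) x.
pose a2 x := ev (lambda F) x.
pose w (i : 'I_4) : bpoly k := [ffun x => ev p x *
   match nat_of_ord i with 0 => 1 | 1 => 1 - a0 x | 2 => (1 - a0 x) * (1 - a1 x)
   | _ => (1 - a0 x) * (1 - a1 x) * (1 - a2 x) end].
apply/existsP; exists [ffun i : 'I_4 => evi (w i)].
apply/eqP/ev_inj => x.
have fE (i : 'I_4) : [ffun i => evi (w i)] i = evi (w i) by rewrite ffunE.
have wE (i : 'I_4) y : w i y = ev p y *
   match nat_of_ord i with 0 => 1 | 1 => 1 - a0 y | 2 => (1 - a0 y) * (1 - a1 y)
   | _ => (1 - a0 y) * (1 - a1 y) * (1 - a2 y) end by rewrite /w ffunE.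
rewrite ev_sum !big_ord_recl big_ord0 /= !evM !fE !evK !wE /=.
case: (boolP (x \in Vset)) => hx.
  by rewrite (H x hx) !mul0r !add0r.
apply: F2_tele; by move: hx; rewrite inE.
Qed.
End Main.

Section Main2.
Variable n : nat.
Local Notation k := (n + n + n)%N.
Variables Q F : {set {set 'I_n}}.
Local Notation I := (ideal_I Q F).

Lemma SM_sub : SM I \subset ~: LMset I.
Proof.
apply/subsetP => m; rewrite /SM inE in_setC; apply: contra => hm.
set s := [seq bmono l | l <- enum (LMset I)].
have hi : (index m (enum (LMset I)) < size s)%N.
  by rewrite size_map index_mem mem_enum.
apply/existsP.
exists [ffun i : 'I_(size s) => if nat_of_ord i == index m (enum (LMset I)) then bone else 0].
apply/eqP; rewrite (bigD1 (Ordinal hi)) //= big1 ?addr0.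
  rewrite ffunE eqxx bmul1 /s (nth_map set0); last by rewrite index_mem mem_enum.
  by rewrite nth_index // mem_enum.
move=> i hne; rewrite ffunE.
have -> : (nat_of_ord i == index m (enum (LMset I))) = false.
  apply/negbTE; apply: contra hne => /eqP h; apply/eqP/val_inj => /=; exact: h.
exact: bmul0.
Qed.

Definition Pc (C : {set {set 'I_k}}) : bpoly k := [ffun m => ((m \in C) : nat)%:R].

Lemma card_S_le_V (G : seq (bpoly k)) : is_groebner I G ->
  (#|~: LMset I| <= #|Vset Q F|)%N.
Proof.
move=> [_ hG].
set S := ~: LMset I; set V := Vset Q F.
rewrite leqNgt; apply/negP => hlt.
pose code (C : {set {set 'I_k}}) : {ffun {x : {set 'I_k} | x \in V} -> 'F_2} :=
  [ffun v => ev (Pc C) (val v)].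
have hninj : ~~ (#|code @: powerset S| == #|powerset S|).
  apply/negP => /eqP he.
  have := max_card (code @: powerset S).
  rewrite he card_powerset card_ffun card_sig card_Fp // leqNgt.
  have -> : #|[pred x | x \in V]| = #|V| by apply: eq_card.
  by rewrite ltn_exp2l // hlt.
have [[C1 C2] /and4P[h1 h2 hc hne]] : exists c : {set {set 'I_k}} * {set {set 'I_k}},
   [&& c.1 \in powerset S, c.2 \in powerset S, code c.1 == code c.2 & c.1 != c.2].
  case: (pickP (fun c : {set {set 'I_k}} * {set {set 'I_k}} =>
      [&& c.1 \in powerset S, c.2 \in powerset S, code c.1 == code c.2 & c.1 != c.2]))
    => [c hc | hn]; first by exists c.
  exfalso; move/imset_injP: hninj; apply => D1 D2 hD1 hD2 he; apply/eqP.
  by move: (hn (D1, D2)) => /=; rewrite hD1 hD2 he eqxx /= => /negbFE.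
simpl in h1, h2, hc, hne.
set p := Pc C1 - Pc C2.
have hpI : I p.
  apply: vanish_in_I => x hx.
  have hc' : ev (Pc C1) x = ev (Pc C2) x.
    by move/eqP/ffunP: hc => /(_ (exist _ x hx)); rewrite !ffunE /=.
  by rewrite /p evB hc' subrr.
have hp0 : p != 0.
  apply: contra hne => /eqP hp; apply/eqP/setP => m.
  move/ffunP: hp => /(_ m); rewrite !ffunE => /eqP; rewrite subr_eq0 => /eqP.
  exact: natb_inj.
have [g _ [mf [mg [hLM _ _]]]] := hG p hpI hp0.
have hmfL : mf \in LMset I.
  by rewrite inE; apply/existsP; exists p; rewrite hpI hp0 hLM.
have hmfS : mf \in S.
  move: hLM => /andP[hpm _].
  move: h1 h2; rewrite !powersetE => /subsetP s1 /subsetP s2.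
  case: (boolP (mf \in C1)) => [h|h1']; first exact: s1.
  case: (boolP (mf \in C2)) => [h|h2']; first exact: s2.
  by move: hpm; rewrite /p !ffunE (negbTE h1') (negbTE h2') subrr eqxx.
by move: hmfS; rewrite /S in_setC hmfL.
Qed.

Definition dec (x : {set 'I_k}) := ((xs x, ys x), ts x).

Lemma dec_inj : injective dec.
Proof.
move=> x1 x2 [e1 e2 e3]; apply/setP => j.
rewrite -(splitK j); case: (split j) => [a|b] /=.
  rewrite -(splitK a); case: (split a) => [c|d] /=.
    by move/setP: e1 => /(_ c); rewrite !inE.
  by move/setP: e2 => /(_ d); rewrite !inE.
by move/setP: e3 => /(_ b); rewrite !inE.
Qed.

Lemma card_V_lt Q1 Q2 F0 : Q1 \in Q -> Q2 \in Q -> F0 \in F -> Q1 :&: Q2 \subset F0 ->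
  (#|Vset Q F| < #|Q| ^ 2 * #|Fstar F|)%N.
Proof.
move=> hQ1 hQ2 hF0 hsub.
set A := setX (setX Q Q) (Fstar F).
have hin : ((Q1, Q2), F0) \in A.
  rewrite !inE hQ1 hQ2 /=; apply/existsP; exists F0; by rewrite hF0 subxx.
have hA : #|A| = (#|Q| ^ 2 * #|Fstar F|)%N by rewrite !cardsX expnS expn1.
rewrite -hA (cardsD1 ((Q1, Q2), F0) A) hin add1n ltnS.
rewrite -(card_imset _ dec_inj); apply: subset_leq_card.
apply/subsetP => y /imsetP[x hx ->]; move: hx; rewrite inE => /and4P[/eqP h1 /eqP h2 /eqP h3 /eqP h4].
rewrite (@ev_xiA n Q (@Xv n) (xs x) x (fun i => ev_Xv i x)) in h1.
rewrite (@ev_xiA n Q (@Yv n) (ys x) x (fun i => ev_Yv i x)) in h2.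
rewrite ev_lambda in h3; rewrite ev_delta in h4.
move/natb_eq0/negbFE: h1 => h1; move/natb_eq0/negbFE: h2 => h2.
move/natb_eq0/negbFE: h3 => h3; move/natb_eq0: h4 => h4.
rewrite !inE; apply/and3P; split; last by move: h3; rewrite inE.
  2: by rewrite /dec /= h1 h2.
rewrite /dec; apply/negP => /eqP [e1 e2 e3].
by rewrite e1 e2 e3 hsub in h4.
Qed.

End Main2.

Theorem mainTheorem4 (n : nat) (Q F : {set {set 'I_n}}) (G : seq (bpoly (n + n + n)))
  (hF : fail_prone F)
  (hG : is_groebner (ideal_I Q F) G)
  (hcard : #|SM (ideal_I Q F)| = (#|Q| ^ 2 * #|Fstar F|)%N) :
  forall Q1 Q2 F0, Q1 \in Q -> Q2 \in Q -> F0 \in F -> ~~ (Q1 :&: Q2 \subset F0).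
Proof.
move=> Q1 Q2 F0 hQ1 hQ2 hF0; apply/negP => hsub.
have h1 := subset_leq_card (SM_sub Q F).
have h2 := card_S_le_V hG.
have h3 := card_V_lt hQ1 hQ2 hF0 hsub.
move: (leq_ltn_trans (leq_trans h1 h2) h3); by rewrite hcard ltnn.
Qed.
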